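(* Fix a representative set $\bar{\mathcal A}$. For any stable semi-private policy $\sigma:\Omega\to\Delta(\mathcal A\times G)$ there exists a stable semi-private policy $\tilde\sigma:\Omega\to\Delta(\bar{\mathcal A}\times\widetilde G)$, for some set $\widetilde G$ of private-information tuples, such that $u_0(\tilde\sigma)\ge u_0(\sigma)$ (in fact equality holds).
   Context: A persuasion instance consists of: a finite set $\Omega$ of worlds; a prior $\mu\in\Delta(\Omega)$; agents $N=\{1,\dots,n\}$; a finite action set $A$; a partition $\mathcal T$ of $N$ into nonempty sets called types; for each $T\in\mathcal T$ a utility $u_T(a,\rho\mid\omega)\in\mathbb R$ defined for $a\in A$, action profiles $\rho$, and $\omega\in\Omega$; a principal utility $u_0(\rho\mid\omega)\in\mathbb R$; and an integer $d\ge 1$ (maximum coalition size). Joint actions are $\mathbf a\in\mathcal A=A^n$; the action profile of $\mathbf a$ is $\rho_{\mathbf a}:\mathcal T\times A\to\mathbb Z_{\ge0}$, $\rho_{\mathbf a}(T,a)=|\{i\in T:a_i=a\}|$. For $i\in T$, $u_i(\mathbf a\mid\omega)=u_T(a_i,\rho_{\mathbf a}\mid\omega)$. A policy is a map $\sigma:\Omega\to\Delta(\mathcal A\times G)$ (finitely supported distributions), where $G$ is a set of tuples $\mathbf g=(g_i)_{i\in N}$; elements $s=(\mathbf a,\mathbf g)$ are meta-signals. In the semi-private mode agent $i$ observes $s_i=(\mathbf a,g_i)$. Agent $i$'s posterior upon observing $s_i$ is $\Pr(\tilde{\mathbf a},\omega\mid s_i)=\mu(\omega)\,\sigma(\{s'=(\tilde{\mathbf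 a},\mathbf g'):s'_i=s_i\}\mid\omega)\big/\sum_{\omega'}\mu(\omega')\,\sigma(\{s':s'_i=s_i\}\mid\omega')$. A meta-signal $s$ is unstable if there exist a nonempty $N'\subseteq N$ with $|N'|\le d$ and actions $(a'_i)_{i\in N'}$ such that for every $i\in N'$: $\sum_{\tilde{\mathbf a},\omega}\Pr(\tilde{\mathbf a},\omega\mid s_i)\,\big(u_i(\tilde{\mathbf a}\oplus\mathbf a'\mid\omega)-u_i(\tilde{\mathbf a}\mid\omega)\big)>0$, where $\tilde{\mathbf a}\oplus\mathbf a'$ replaces $\tilde a_i$ by $a'_i$ for all $i\in N'$; otherwise $s$ is stable. A policy is stable if every meta-signal it sends with positive probability is stable. The principal's utility is $u_0(\sigma)=\sum_\omega\mu(\omega)\sum_{(\mathbf a,\mathbf g)}\sigma((\mathbf a,\mathbf g)\mid\omega)\,u_0(\rho_{\mathbf a}\mid\omega)$. A representative set $\bar{\mathcal A}\subseteq\mathcal A$ contains, for each action profile $\rho$ realizable by some joint action, exactly one $\bar{\mathbf a}$ with $\rho_{\bar{\mathbf a}}=\rho$. *)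

(* Defs.v *)
From HB Require Import structures.
From mathcomp Require Export all_boot all_order all_algebra.
Set Implicit Arguments. Unset Strict Implicit. Unset Printing Implicit Defensive.
Import Order.TTheory GRing.Theory Num.Theory.
Local Open Scope ring_scope.

(* Agents are 'I_n; joint actions are {ffun 'I_n -> A}; types are given by a
   map tp : 'I_n -> T (the partition of N into the fibers of tp);
   action profiles are {ffun T * A -> nat}. *)

Definition prof (n : nat) (A T : finType) (tp : 'I_n -> T)
  (a : {ffun 'I_n -> A}) : {ffun T * A -> nat} :=
  [ffun ta => #|[set i : 'I_n | (tp i == ta.1) && (a i == ta.2)]|].

Definition util (R : realFieldType) (n : nat) (Omega A T : finType)
  (tp : 'I_n -> T) (u : T -> A -> {ffun T * A -> nat} -> Omega -> R)
  (i : 'I_n) (a : {ffun 'I_n -> A}) (w : Omega) : R :=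
  u (tp i) (a i) (prof tp a) w.

Definition replace (n : nat) (A : finType) (a : {ffun 'I_n -> A})
  (Np : {set 'I_n}) (a' : {ffun 'I_n -> A}) : {ffun 'I_n -> A} :=
  [ffun j => if j \in Np then a' j else a j].

Definition is_prior (R : realFieldType) (Omega : finType) (mu : Omega -> R) :=
  (forall w, 0 <= mu w) /\ \sum_w mu w = 1.

Definition fsdist (R : realFieldType) (X : eqType) (p : X -> R) (s : seq X) :=
  [/\ uniq s, forall x, 0 <= p x, forall x, p x != 0 -> x \in s
    & \sum_(x <- s) p x = 1].

Notation msig n A S := ({ffun 'I_n -> A} * {ffun 'I_n -> S})%type.

Definition policy (R : realFieldType) (Omega : finType) (n : nat) (A : finType)
  (S : eqType) (sigma : Omega -> msig n A S -> R) (supp : seq (msig n A S)) :=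
  forall w, fsdist (sigma w) supp.

(* Semi-private mode: agent i observes s_i = (a, g_i).
   Pr(at, w | s_i) = mu(w) sigma({s' = (at, g') : s'_i = s_i} | w) /
                     sum_w' mu(w') sigma({s' : s'_i = s_i} | w') *)
Definition posterior (R : realFieldType) (Omega : finType) (n : nat)
  (A : finType) (S : eqType) (mu : Omega -> R)
  (sigma : Omega -> msig n A S -> R) (supp : seq (msig n A S))
  (i : 'I_n) (s : msig n A S) (at_ : {ffun 'I_n -> A}) (w : Omega) : R :=
  mu w * (\sum_(s' <- supp | [&& s'.1 == at_, s'.1 == s.1 & s'.2 i == s.2 i])
            sigma w s')
  / (\sum_w' mu w' * \sum_(s' <- supp | (s'.1 == s.1) && (s'.2 i == s.2 i))
            sigma w' s').

Definition unstable (R : realFieldType) (Omega : finType) (n : nat)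
  (A T : finType) (S : eqType) (tp : 'I_n -> T)
  (u : T -> A -> {ffun T * A -> nat} -> Omega -> R) (mu : Omega -> R)
  (d : nat) (sigma : Omega -> msig n A S -> R) (supp : seq (msig n A S))
  (s : msig n A S) : Prop :=
  exists (Np : {set 'I_n}) (a' : {ffun 'I_n -> A}),
    [/\ Np != set0, (#|Np| <= d)%N &
      forall i, i \in Np ->
        0 < \sum_(at_ : {ffun 'I_n -> A}) \sum_(w : Omega)
              posterior mu sigma supp i s at_ w
              * (util tp u i (replace at_ Np a') w - util tp u i at_ w)].

Definition stable (R : realFieldType) (Omega : finType) (n : nat)
  (A T : finType) (S : eqType) (tp : 'I_n -> T)
  (u : T -> A -> {ffun T * A -> nat} -> Omega -> R) (mu : Omega -> R)
  (d : nat) (sigma : Omega -> msig n A S -> R) (supp : seq (msig n A S))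
  (s : msig n A S) : Prop :=
  ~ unstable tp u mu d sigma supp s.

Definition stable_policy (R : realFieldType) (Omega : finType) (n : nat)
  (A T : finType) (S : eqType) (tp : 'I_n -> T)
  (u : T -> A -> {ffun T * A -> nat} -> Omega -> R) (mu : Omega -> R)
  (d : nat) (sigma : Omega -> msig n A S -> R) (supp : seq (msig n A S)) :=
  forall s, s \in supp -> 0 < \sum_w mu w * sigma w s ->
    stable tp u mu d sigma supp s.

Definition principal_util (R : realFieldType) (Omega : finType) (n : nat)
  (A T : finType) (S : eqType) (tp : 'I_n -> T)
  (u0 : {ffun T * A -> nat} -> Omega -> R) (mu : Omega -> R)
  (sigma : Omega -> msig n A S -> R) (supp : seq (msig n A S)) : R :=
  \sum_w mu w * \sum_(s <- supp) sigma w s * u0 (prof tp s.1) w.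

Definition representative (n : nat) (A T : finType) (tp : 'I_n -> T)
  (Abar : {set {ffun 'I_n -> A}}) :=
  forall a : {ffun 'I_n -> A}, #|[set b in Abar | prof tp b == prof tp a]| = 1%N.

(* Main.v *)
Require Import Defs.
From mathcomp Require Import all_boot all_order all_algebra fingroup perm.
Import Order.TTheory GRing.Theory Num.Theory.
Set Implicit Arguments. Unset Strict Implicit. Unset Printing Implicit Defensive.
Local Open Scope ring_scope.

Lemma prof_perm n (A T : finType) (tp : 'I_n -> T) (p : {perm 'I_n})
  (c c' : {ffun 'I_n -> A}) :
  (forall i, tp (p i) = tp i) -> (forall i, c (p i) = c' i) ->
  prof tp c = prof tp c'.
Proof.
move=> Htp Hc; apply/ffunP => ta; rewrite !ffunE.
rewrite -(card_preimset _ (@perm_inj _ p)); apply: eq_card => i.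
by rewrite !inE Htp Hc.
Qed.

Lemma count_card (T : finType) (P : pred T) : count P (enum T) = #|P|.
Proof. by rewrite enumT cardE /enum_mem size_filter. Qed.

Lemma exists_perm n (A T : finType) (tp : 'I_n -> T) (a b : {ffun 'I_n -> A}) :
  prof tp a = prof tp b ->
  exists p : {perm 'I_n}, forall i, tp (p i) = tp i /\ b (p i) = a i.
Proof.
move=> Hab.
have [i0 _|none] := pickP (fun _ : 'I_n => true); last first.
  by exists 1%g => i; have := none i.
pose key (c : {ffun 'I_n -> A}) (i : 'I_n) := (tp i, c i).
have cnt c x : count_mem x (map (key c) (enum 'I_n)) = prof tp c x.
  rewrite count_map count_card ffunE cardsE; apply: eq_card => i.
  by case: x => t y; rewrite !inE /key /= xpair_eqE.
have Hst : perm_eq (map (key a) (enum 'I_n)) (map (key b) (enum 'I_n)).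
  by apply/allP => x _ /=; apply/eqP; rewrite !cnt Hab.
have x0 := key a i0.
case/(perm_iotaP x0): Hst => Is HIs Hs.
rewrite size_map size_enum_ord in HIs.
have sIs : size Is = n by rewrite (perm_size HIs) size_iota.
have ltIs (k : 'I_n) : (nth 0%N Is k < n)%N.
  have : nth 0%N Is k \in Is by rewrite mem_nth // sIs.
  by rewrite (perm_mem HIs) mem_iota.
pose h (k : 'I_n) : 'I_n := insubd k (nth 0%N Is k).
have hval k : val (h k) = nth 0%N Is k by rewrite val_insubd ltIs.
have uIs : uniq Is by rewrite (perm_uniq HIs) iota_uniq.
have hinj : injective h.
  move=> k1 k2 /(congr1 val); rewrite !hval => E.
  apply/val_inj; move/uniqP: uIs => /(_ 0%N); by apply => //; rewrite inE sIs ltn_ord.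
have Hk (k : 'I_n) : key a k = key b (h k).
  have := congr1 (fun s => nth x0 s k) Hs => /=.
  rewrite (nth_map i0) ?size_enum_ord // nth_ord_enum => ->.
  rewrite (nth_map 0%N) ?sIs //.
  rewrite -hval (nth_map i0) ?size_enum_ord ?ltn_ord //.
  by congr (key b _); apply: val_inj; exact: (nth_enum_ord i0 (ltn_ord (h k))).
exists (perm hinj) => i; rewrite permE; have := Hk i.
by rewrite /key => -[-> ->].
Qed.

Definition bar n (A T : finType) (tp : 'I_n -> T)
  (Abar : {set {ffun 'I_n -> A}}) (a : {ffun 'I_n -> A}) :=
  odflt a [pick b in Abar | prof tp b == prof tp a].

Definition pa n (A T : finType) (tp : 'I_n -> T)
  (Abar : {set {ffun 'I_n -> A}}) (a : {ffun 'I_n -> A}) : {perm 'I_n} :=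
  odflt 1%g [pick p : {perm 'I_n} |
     [forall i, (tp (p i) == tp i) && (bar tp Abar a (p i) == a i)]].

Arguments bar : simpl never.
Arguments pa : simpl never.

Lemma bar_spec n (A T : finType) (tp : 'I_n -> T)
  (Abar : {set {ffun 'I_n -> A}}) a :
  representative tp Abar -> bar tp Abar a \in Abar /\ prof tp (bar tp Abar a) = prof tp a.
Proof.
move=> /(_ a) H; rewrite /bar; case: pickP => [b /andP[bin /eqP E]|none] //=.
have : #|[set b in Abar | prof tp b == prof tp a]| != 0%N by rewrite H.
by rewrite cards_eq0 => /set0Pn[b]; rewrite inE none.
Qed.

Lemma pa_spec n (A T : finType) (tp : 'I_n -> T)
  (Abar : {set {ffun 'I_n -> A}}) a :
  representative tp Abar -> forall i,
  tp (pa tp Abar a i) = tp i /\ bar tp Abar a (pa tp Abar a i) = a i.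
Proof.
move=> /(bar_spec a) [_ Hp]; rewrite /pa; case: pickP => [p /forallP Hq|none] /=.
  by move=> i; have /andP[/eqP -> /eqP ->] := Hq i.
have [p Hpp] := exists_perm (esym Hp).
have := none p; rewrite /=; move/negbT/forallPn => [i]; rewrite negb_and.
by have [-> ->] := Hpp i; rewrite !eqxx.
Qed.

Definition fmap n (A T : finType) (tp : 'I_n -> T)
  (Abar : {set {ffun 'I_n -> A}}) (S : eqType) (s : msig n A S) :
  msig n A ({ffun 'I_n -> A} * S)%type :=
  (bar tp Abar s.1, [ffun j => (s.1, s.2 ((pa tp Abar s.1)^-1 j)%g)]).

Lemma gain_simpl (R : realFieldType) (Omega : finType) (n : nat) (A : finType)
  (S : eqType) (mu : Omega -> R) (sigma : Omega -> msig n A S -> R)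
  (supp : seq (msig n A S)) (i : 'I_n) (s : msig n A S)
  (h : {ffun 'I_n -> A} -> Omega -> R) :
  \sum_(at_ : {ffun 'I_n -> A}) \sum_(w : Omega)
     posterior mu sigma supp i s at_ w * h at_ w
  = \sum_w mu w * (\sum_(x <- supp | (x.1 == s.1) && (x.2 i == s.2 i)) sigma w x)
     / (\sum_w' mu w' * \sum_(x <- supp | (x.1 == s.1) && (x.2 i == s.2 i)) sigma w' x)
     * h s.1 w.
Proof.
rewrite (bigD1 s.1) //= [X in _ + X]big1 ?addr0.
  apply: eq_bigr => w _; rewrite /posterior.
  by congr (_ * _ / _ * _); apply: eq_bigl => x; rewrite andbA andbb.
move=> at_ Hne; apply: big1 => w _; rewrite /posterior big_pred0 ?mulr0 ?mul0r //.
move=> x; apply/negbTE; case: eqP => //= ->; by rewrite (negbTE Hne).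
Qed.

Lemma gain_eq (R : realFieldType) (Omega : finType) (n : nat) (A : finType)
  (S1 S2 : eqType) (mu : Omega -> R)
  (sigma1 : Omega -> msig n A S1 -> R) (supp1 : seq (msig n A S1))
  (i1 : 'I_n) (s1 : msig n A S1) (h1 : {ffun 'I_n -> A} -> Omega -> R)
  (sigma2 : Omega -> msig n A S2 -> R) (supp2 : seq (msig n A S2))
  (i2 : 'I_n) (s2 : msig n A S2) (h2 : {ffun 'I_n -> A} -> Omega -> R) :
  (forall w, \sum_(x <- supp1 | (x.1 == s1.1) && (x.2 i1 == s1.2 i1)) sigma1 w x
           = \sum_(x <- supp2 | (x.1 == s2.1) && (x.2 i2 == s2.2 i2)) sigma2 w x) ->
  (forall w, h1 s1.1 w = h2 s2.1 w) ->
  \sum_(at_ : {ffun 'I_n -> A}) \sum_(w : Omega)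
     posterior mu sigma1 supp1 i1 s1 at_ w * h1 at_ w =
  \sum_(at_ : {ffun 'I_n -> A}) \sum_(w : Omega)
     posterior mu sigma2 supp2 i2 s2 at_ w * h2 at_ w.
Proof.
move=> NN HH; rewrite !gain_simpl; apply: eq_bigr => w _.
rewrite NN HH; congr (_ / _ * _); apply: eq_bigr => w' _; by rewrite NN.
Qed.

Theorem lemma4 (R : realFieldType) (Omega : finType) (mu : Omega -> R)
  (n : nat) (A T : finType) (tp : 'I_n -> T)
  (u : T -> A -> {ffun T * A -> nat} -> Omega -> R)
  (u0 : {ffun T * A -> nat} -> Omega -> R) (d : nat)
  (Abar : {set {ffun 'I_n -> A}}) :
  is_prior mu ->
  (forall t : T, exists i : 'I_n, tp i = t) ->
  (1 <= d)%N ->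
  representative tp Abar ->
  forall (S : eqType) (sigma : Omega -> msig n A S -> R)
         (supp : seq (msig n A S)),
  policy sigma supp ->
  stable_policy tp u mu d sigma supp ->
  exists (S' : eqType) (sigma' : Omega -> msig n A S' -> R)
         (supp' : seq (msig n A S')),
    [/\ policy sigma' supp',
        forall w s, sigma' w s != 0 -> s.1 \in Abar,
        stable_policy tp u mu d sigma' supp',
        principal_util tp u0 mu sigma supp <= principal_util tp u0 mu sigma' supp'
      & principal_util tp u0 mu sigma' supp' = principal_util tp u0 mu sigma supp].
Proof.
move=> _ _ _ Hrep S sigma supp Hpol Hstab.
pose f := @fmap n A T tp Abar S.
have fmap1 x : (f x).1 = bar tp Abar x.1 by [].
have fmap2 x j : (f x).2 j = (x.1, x.2 ((pa tp Abar x.1)^-1%g j)) by rewrite ffunE.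
have finj : injective f.
  move=> x y E.
  have E1 : x.1 = y.1.
    by apply/ffunP => k; have := congr1 (fun s : msig n A ({ffun 'I_n -> A} * S)%type => (s.2 k).1) E; rewrite /f /fmap /= !ffunE /= => ->.
  have E2 : x.2 = y.2.
    apply/ffunP => k; have := congr1 (fun s : msig n A ({ffun 'I_n -> A} * S)%type => (s.2 (pa tp Abar x.1 k)).2) E.
    by rewrite /f /fmap /= !ffunE /= -E1 permK.
  by case: x y E1 E2 {E} => [? ?] [? ?] /= -> ->.
pose sigma' w s' := \sum_(s <- supp | f s == s') sigma w s.
pose supp' := undup (map f supp).
have K2 w x : uniq supp -> x \in supp -> sigma' w (f x) = sigma w x.
  move=> us xin; rewrite /sigma' (eq_bigl (pred1 x)) => [|y]; last first.
    by rewrite /= (inj_eq finj).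
  by rewrite -big_filter filter_pred1_uniq // big_seq1.
have Esupp' : uniq supp -> supp' = map f supp.
  by move=> us; rewrite /supp' undup_id // map_inj_uniq.
have nz w s' : sigma' w s' != 0 -> exists2 x, x \in supp & s' = f x.
  move=> H; case: (boolP (has (fun x => f x == s') supp)) => [/hasP[x xin /eqP <-]|/hasPn Hn].
    by exists x.
  move: H; rewrite /sigma' big1_seq ?eqxx // => x /andP[Hx xin].
  by move: (Hn x xin); rewrite Hx.
exists (({ffun 'I_n -> A} * S)%type : eqType), sigma', supp'.
have Hpu : principal_util tp u0 mu sigma' supp' = principal_util tp u0 mu sigma supp.
  rewrite /principal_util; apply: eq_bigr => w _; congr (_ * _).
  have [us _ _ _] := Hpol w.
  rewrite Esupp' // big_map; apply: eq_big_seq => x xin.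
  by rewrite K2 //; have [_ ->] := bar_spec x.1 Hrep.
split => //; last by rewrite Hpu.
- move=> w; have [us ge0 sup s1] := Hpol w; split.
  + exact: undup_uniq.
  + by move=> s'; apply: sumr_ge0 => x _; apply: ge0.
  + move=> s' /nz[x xin ->]; by rewrite mem_undup map_f.
  + by rewrite Esupp' // big_map -s1; apply: eq_big_seq => x xin; rewrite K2.
- move=> w s' /nz[x _ ->]; by have [] := bar_spec x.1 Hrep.
move=> s'; rewrite mem_undup => /mapP[s sin ->] pos.
have [w0 _ | none] := pickP (fun _ : Omega => true); last first.
  by move: pos; rewrite big_pred0 ?ltxx // => w; exact: none w.
have [us _ _ _] := Hpol w0.
have pos' : 0 < \sum_w mu w * sigma w s.
  by move: pos; rewrite (eq_bigr (fun w => mu w * sigma w s)) // => w _; rewrite K2.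
have Hst := Hstab s sin pos'.
move=> [Np [a' [Hne Hcard Hgain]]]; apply: Hst.
pose p := pa tp Abar s.1.
have Hp := pa_spec s.1 Hrep.
pose a'' := [ffun i => a' (p i)].
exists (p @^-1: Np), a''; split.
- by rewrite -card_gt0 card_preimset ?card_gt0 //; apply: perm_inj.
- by rewrite card_preimset //; apply: perm_inj.
move=> i; rewrite inE => Hi.
apply: (lt_le_trans (Hgain _ Hi)); rewrite le_eqVlt; apply/orP; left; apply/eqP.
have GE := (@gain_eq R Omega n A _ _ mu sigma' supp' (p i) (f s)
  (fun at_ w => util tp u (p i) (replace at_ Np a') w - util tp u (p i) at_ w)
  sigma supp i s
  (fun at_ w => util tp u i (replace at_ (p @^-1: Np) a'') w - util tp u i at_ w)).
have X : forall w, \sum_(x <- supp' | (x.1 == (f s).1) && (x.2 (p i) == (f s).2 (p i))) sigma' w x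
           = \sum_(x <- supp | (x.1 == s.1) && (x.2 i == s.2 i)) sigma w x.
  have Ncond : forall x : msig n A S,
      ((f x).1 == (f s).1) && ((f x).2 (p i) == (f s).2 (p i)) = (x.1 == s.1) && (x.2 i == s.2 i).
    move=> x; rewrite !fmap1 !fmap2 permK xpair_eqE.

    case: (eqVneq x.1 s.1) => [E|ne].
      by rewrite E eqxx /p permK !andTb.
    by rewrite !andFb andbF.

  move=> w; rewrite Esupp' // big_map (eq_bigl _ _ Ncond).
 rewrite big_seq_cond [RHS]big_seq_cond.
  apply: eq_bigr => x /andP[xin _]. exact: K2 w x us xin.
have Y : forall w, util tp u (p i) (replace (f s).1 Np a') w - util tp u (p i) (f s).1 w = util tp u i (replace s.1 (p @^-1: Np) a'') w - util tp u i s.1 w.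
  move=> w; rewrite fmap1 /util.
  have [Ht Hb] := Hp i.
  have Htp k : tp (p k) = tp k by case: (Hp k).
  have Hprof1 : prof tp (bar tp Abar s.1) = prof tp s.1.
    by apply: (prof_perm (p := p)) => // k; case: (Hp k).
  have Hrep2 k : replace (bar tp Abar s.1) Np a' (p k) = replace s.1 (p @^-1: Np) a'' k.
    rewrite /replace !ffunE inE; case: ifP => // _; by case: (Hp k).
  have Hprof2 : prof tp (replace (bar tp Abar s.1) Np a') = prof tp (replace s.1 (p @^-1: Np) a'').
    by apply: (prof_perm (p := p)).

  by rewrite Hprof1 Hprof2 Hrep2 Htp Hb.

exact: (GE X Y).
Qed.
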